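(* Let $G=(V,E)$ be a finite graph and suppose $r\in R(V)$ is an isoperimetric order on $V$ for $G$ which has initial-segment closure. Then \[ b(G) = \min_{r' \in R(V)} \max_{0 \le k \le |V|} |B_G(r'_k)|. \]
   Context: An order of $V$ is a bijection $r:V\to\{0,\ldots,|V|-1\}$; $R(V)$ denotes the set of all orders. For an order $r$ and $0\le k\le |V|$, the $k$-th initial segment is $r_k = r^{-1}(\{0,\ldots,k-1\})$. The graph bandwidth is $b(G)=\min_{r\in R(V)}\max_{\{v,w\}\in E}|r(v)-r(w)|$. For $W\subseteq V$, the vertex boundary $B_G(W)$ is the set of vertices in $V\setminus W$ adjacent to some vertex of $W$, and the vertex boundary closure is $C_G(W)=W\cup B_G(W)$. An order $r$ is an isoperimetric order on $V$ for $G$ if for every order $r'$ of $V$ and every $0\le k\le |V|$, $|B_G(r_k)|\le |B_G(r'_k)|$. An order $r$ has initial-segment closure if for every $k$, $C_G(r_k)$ is itself an initial segment of $r$ (i.e. equals $r_{k'}$ for some $k'$). *)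

(* Defs.v *)
From mathcomp Require Import all_boot.
Set Implicit Arguments. Unset Strict Implicit. Unset Printing Implicit Defensive.

Definition simple_graph (V : finType) (e : rel V) : Prop :=
  symmetric e /\ irreflexive e.

(* Orders of V: bijections V -> {0,...,|V|-1}, represented as finite functions
   into 'I_#|V| that are injective (hence bijective, by cardinality). *)
Definition is_order (V : finType) (r : {ffun V -> 'I_#|V|}) : bool := injectiveb r.

Definition init_seg (V : finType) (r : {ffun V -> 'I_#|V|}) (k : nat) : {set V} :=
  [set v | r v < k].

Definition vboundary (V : finType) (e : rel V) (W : {set V}) : {set V} :=
  [set v | (v \notin W) && [exists w in W, e w v]].

Definition vclosure (V : finType) (e : rel V) (W : {set V}) : {set V} :=
  W :|: vboundary e W.

Definition order_bandwidth (V : finType) (e : rel V) (r : {ffun V -> 'I_#|V|}) : nat :=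
  \max_(p : V * V | e p.1 p.2) (if r p.1 <= r p.2 then r p.2 - r p.1 else r p.1 - r p.2).

(* minimum over all orders; the default #|V| is an upper bound on every value
   involved and is never attained as the minimum of an empty family, since the
   set of orders is nonempty *)
Definition min_over_orders (V : finType) (f : {ffun V -> 'I_#|V|} -> nat) : nat :=
  \big[minn/#|V| * #|V| + #|V|]_(r : {ffun V -> 'I_#|V|} | is_order r) f r.

Definition bandwidth (V : finType) (e : rel V) : nat :=
  min_over_orders (order_bandwidth e).

Definition max_boundary (V : finType) (e : rel V) (r : {ffun V -> 'I_#|V|}) : nat :=
  \max_(k < #|V|.+1) #|vboundary e (init_seg r k)|.

Definition isoperimetric (V : finType) (e : rel V) (r : {ffun V -> 'I_#|V|}) : Prop :=
  is_order r /\
  forall r' : {ffun V -> 'I_#|V|}, is_order r' ->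
    forall k, k <= #|V| ->
      #|vboundary e (init_seg r k)| <= #|vboundary e (init_seg r' k)|.

Definition init_seg_closure (V : finType) (e : rel V) (r : {ffun V -> 'I_#|V|}) : Prop :=
  forall k, k <= #|V| -> exists2 k', k' <= #|V| & vclosure e (init_seg r k) = init_seg r k'.

(* Main.v *)
Require Import Defs.
From mathcomp Require Import all_boot.
From mathcomp Require Import zify.

Lemma bigmin_le (I : finType) (P : pred I) (F : I -> nat) D i0 :
  P i0 -> \big[minn/D]_(i | P i) F i <= F i0.
Proof.
move=> Pi0; rewrite unlock.
have : i0 \in index_enum I by rewrite mem_index_enum.
elim: (index_enum I) => [|a s IH] //= ; rewrite inE => /predU1P [<-|Hs].
  by rewrite Pi0 geq_minl.
case: (P a) => //; last exact: IH.
exact: leq_trans (geq_minr _ _) (IH Hs).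
Qed.

Lemma bigmin_ge (I : finType) (P : pred I) (F : I -> nat) D m :
  m <= D -> (forall i, P i -> m <= F i) -> m <= \big[minn/D]_(i | P i) F i.
Proof.
move=> HD HF; elim/big_ind: _ => //; first by move=> x y; rewrite leq_min => -> ->.
Qed.

Section Aux.
Variables (V : finType) (r : {ffun V -> 'I_#|V|}).
Hypothesis rinj : injective r.

Lemma card_upper (S : {set V}) a b :
  (forall x, x \in S -> a <= r x < a + b) -> #|S| <= b.
Proof.
move=> H; rewrite cardE -(size_map (fun x => val (r x))) -(size_iota a b).
apply: uniq_leq_size.
  rewrite map_inj_uniq ?enum_uniq //; move=> x y /val_inj; exact: rinj.
move=> j /mapP [x]; rewrite mem_enum => /H Hx ->; rewrite mem_iota; exact: Hx.
Qed.

Lemma r_surj (j : 'I_#|V|) : exists x, r x = j.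
Proof.
have : r @: [set: V] = [set: 'I_#|V|].
  apply/eqP; rewrite eqEcard subsetT /= card_imset // cardsT cardsT card_ord //.
move=> H; have : j \in r @: [set: V] by rewrite H in_setT.
by case/imsetP => x _ ->; exists x.
Qed.

Lemma card_lower (S : {set V}) a b :
  a + b <= #|V| ->
  (forall x, a <= r x < a + b -> x \in S) -> b <= #|S|.
Proof.
move=> Hab H; rewrite cardE -(size_map (fun x => val (r x))) -{1}(size_iota a b).
apply: uniq_leq_size; first exact: iota_uniq.
move=> j; rewrite mem_iota => Hj.
have jlt : j < #|V| by lia.
have [x Hx] := r_surj (Ordinal jlt).
apply/mapP; exists x; last by rewrite Hx.
by rewrite mem_enum; apply: H; rewrite Hx.
Qed.
End Aux.

Theorem lemma3 (V : finType) (e : rel V) (r : {ffun V -> 'I_#|V|}) :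
  simple_graph e ->
  isoperimetric e r ->
  init_seg_closure e r ->
  bandwidth e = min_over_orders (max_boundary e).
Proof.
move=> [esym eirr] [ro iso] clo.
set M := max_boundary e r.
have rinj : injective r by apply/injectiveP.
have MleV : M <= #|V|.
  apply/bigmax_leqP => k _; exact: max_card.
have MD : M <= #|V| * #|V| + #|V| by exact: leq_trans MleV (leq_addl _ _).
have Mle : forall r', is_order r' -> M <= max_boundary e r'.
  move=> r' ro'; apply/bigmax_leqP => k _.
  apply: leq_trans (iso r' ro' k _) _; first by rewrite -ltnS.
  rewrite /max_boundary; exact: (@leq_bigmax _ (fun k : 'I_#|V|.+1 => #|vboundary e (init_seg r' k)|) k).
have mbb : forall r', is_order r' -> max_boundary e r' <= order_bandwidth e r'.
  move=> r' ro'; have r'inj : injective r' by apply/injectiveP.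
  apply/bigmax_leqP => k _.
  apply: (@card_upper V r' r'inj _ k) => x.
  rewrite inE => /andP [xn /existsP [w /andP [wi ewx]]].
  move: xn wi; rewrite !inE -leqNgt => kx wk; rewrite kx /=.
  have : (if r' w <= r' x then r' x - r' w else r' w - r' x) <= order_bandwidth e r'.
    exact: (leq_bigmax_cond (F := fun p : V * V => if r' p.1 <= r' p.2 then r' p.2 - r' p.1 else r' p.1 - r' p.2) (w, x) ewx).
  rewrite (ltnW (leq_trans wk kx)).
  move: wk kx; move: (nat_of_ord k) (nat_of_ord (r' x)) (nat_of_ord (r' w)) (order_bandwidth e r') => ? ? ? ? ? ? ?; lia.
have obM : order_bandwidth e r <= M.
  apply/bigmax_leqP => [[w v]] /= ewv.
  wlog lt : w v ewv / r w <= r v.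
    move=> W; case: (leqP (r w) (r v)) => h.
      by have := W w v ewv h; rewrite h.
    have evw : e v w by rewrite esym.
    by have := W v w evw (ltnW h); rewrite (ltnW h).
  rewrite lt.
  have [k' k'le Hc] := clo (r w).+1 (ltn_ord _).
  have vin : v \in init_seg r k'.
    rewrite -Hc !inE; case: ltnP => //= _.
    by apply/existsP; exists w; rewrite !inE ltnSn.
  have rvk : r v < k' by move: vin; rewrite inE.
  apply: (@leq_trans #|vboundary e (init_seg r (r w).+1)|).
    apply: (@card_lower V r rinj _ (r w).+1); first by rewrite addSn subnKC.
    move=> x Hx.
    have : x \in init_seg r k'.
      rewrite inE; move: Hx rvk lt; move: (nat_of_ord (r x)) (nat_of_ord (r v)) (nat_of_ord (r w)) => ? ? ? ? ? ?; lia.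
    rewrite -Hc !inE; case/orP => //; move: Hx; move: (nat_of_ord (r x)) (nat_of_ord (r w)) => ? ? ? ?; lia.
  have hk : (r w).+1 < #|V|.+1 by rewrite ltnS.
  rewrite /M /max_boundary; exact: (@leq_bigmax _ (fun k : 'I_#|V|.+1 => #|vboundary e (init_seg r k)|) (Ordinal hk)).
rewrite /bandwidth /min_over_orders.
apply/eqP; rewrite eqn_leq; apply/andP; split.
- apply: (leq_trans (@bigmin_le _ (fun r0 => is_order r0) (order_bandwidth e) _ r ro)); apply: (leq_trans obM).
  by apply: bigmin_ge => // r' ro'; apply: Mle.
- apply: (leq_trans (@bigmin_le _ (fun r0 => is_order r0) (max_boundary e) _ r ro)).
  by apply: bigmin_ge => // r' ro'; apply: leq_trans (Mle r' ro') (mbb r' ro').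
Qed.
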